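(* Let $\mathcal C$ be an operadic category. The unit $U$ of $\mathrm{Coll}_{\mathcal C}$ has a unique right $U$-module structure, and with it $U$ is the unit of $\mathrm{Coll}_{\mathcal C}^U$. For right $U$-modules (equivalently presheaves on $\mathbb C$) $X$ and $Y$, the tensor product $X\wedge Y$ is the quotient of $X*Y$ by the equivalence relation generated by $(x,\pi\varphi,y)\sim(x\pi,\varphi,y_\pi)$, where $\varphi:c\to d'$ is in $\mathcal C$, $\pi:d'\to d$ is in $\mathbb C$, $x\in X_d$, $y=(y_i)_{i\in|d|}$ with $y_i\in Y_{(\pi\varphi)^{-1}i}$, and $y_\pi$ is the $|d'|$-indexed family with $(y_\pi)_{i'}=y_{|\pi|(i')}$. Moreover, if $\sigma:c'\to c$ is in $\mathbb C$, then the $\mathbb C$-action on $X\wedge Y$ is given by $[x,\varphi,y]\sigma=[x,\varphi\sigma,y\sigma]$, where $\varphi:c\to d$, $x\in X_d$, $y=(y_i\in Y_{\varphi^{-1}i})_{i\in|d|}$, and $y\sigma$ is the $|d|$-indexed family with $(y\sigma)_i=y_i\sigma_i^\varphi$.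
   Context: Operadic categories: $\mathcal S$ is a skeleton of finite sets, with fixed equivalences $R_I:\mathcal S/I\to\mathcal S^I$ sending $f:J\to I$ to its fibres. An operadic category is a category $\mathcal C$ with a functor $|\cdot|:\mathcal C\to\mathcal S$ and functors $R_c:\mathcal C/c\to\mathcal C^{|c|}$ with $|\cdot|^{|c|}\circ R_c=R_{|c|}\circ(|\cdot|/c)$; the fibre $\psi^{-1}i$ of $\psi:c\to d$ at $i\in|d|$ is the $i$-th component of $R_d(\psi)$; for $\varphi:b\to c,\psi:c\to d$, $\varphi^\psi=R_d(\varphi:\psi\varphi\to\psi)$ with components $\varphi^\psi_j:(\psi\varphi)^{-1}j\to\psi^{-1}j$; $u$ is trivial if $|u|=1$ and $R_u=\mathrm{dom}$. Axioms: fibres of identities are trivial; double slice condition: for $\psi:c\to d$, $R_c\circ(\mathrm{dom}/\psi)=(\cong)\circ(\prod_jR_{\psi^{-1}j})\circ(R_d/\psi)$ as functors $(\mathcal C/d)/\psi\to\mathcal C^{|c|}$, via $\mathcal C^{|d|}/R_d\psi\cong\prod_j\mathcal C/\psi^{-1}j$ and $|c|\cong\sum_j|\psi|^{-1}j$. A morphism is fibrewise trivial if all its fibres are trivial; these form a wide subcategory $\mathbb C$ of $\mathcal C$. $\mathrm{Coll}_{\mathcal C}$ is the skew monoidal category with underlying category $\mathbf{Set}/C$ ($C$ = object set; objects $\partial:X\to C$, $X_c=\partial^{-1}c$), tensor $(X*Y)_c=\sum_{\varphi:c\to d}X_d\times\prod_{i\in|d|}Y_{\varphi^{-1}i}$ (elements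 $(x,\varphi,y)$), unit $U$ the set of trivial objects, maps $\alpha(x,\psi,y,\varphi,z)=(x,\psi\varphi,y,\varphi^\psi,z)$, $\lambda(u,\varphi,x)=x$, $\rho(x)=(x,1_{\partial x},(1_{\partial x}^{-1}i)_i)$. A right $U$-module is $X$ with $r:X*U\to X$ such that $r(r*1)=r(1*\lambda)\alpha$ and $r\rho=1$. An element of $(X*U)_c$ amounts to a morphism $\pi:c\to d$ in $\mathbb C$ and $x\in X_d$; thus a right $U$-module is the same as a presheaf on $\mathbb C$, writing $x\pi\in X_c$ for the action. $\mathrm{Coll}_{\mathcal C}^U$ is the category of right $U$-modules with the following skew monoidal structure: $X\wedge Y$ is the coequalizer $p:X*Y\to X\wedge Y$ of the two maps $r_X*1$ and $(1*\lambda)\circ\alpha$ from $(X*U)*Y$ to $X*Y$, with action $r:(X\wedge Y)*U\to X\wedge Y$ determined by $r\circ(p*1)=p\circ(1*r_Y)\circ\alpha$; the unit is $U$; the structure maps are induced from those of $\mathrm{Coll}_{\mathcal C}$ via the quotient maps. $[x,\varphi,y]$ denotes the class of $(x,\varphi,y)$. *)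

(* Defs.v *)
From Stdlib Require Import Relations.Relation_Operators.
From Stdlib Require List.
From mathcomp Require Import all_boot.

Set Implicit Arguments.
Unset Strict Implicit.
Unset Printing Implicit Defensive.

(* The skeleton S of finite sets: the object n is {0,...,n-1}; a map        *)
(* m -> n is represented by f : nat -> nat (only its values on i < m        *)
(* matter).  The fixed equivalences R_I : S/I -> S^I are the canonical      *)
(* order-preserving ones: the fibre of f : m -> n at i is the cardinal of   *)
(* f^{-1}(i), its elements being enumerated in increasing order.            *)

Definition sfibcard (f : nat -> nat) (m i : nat) : nat :=
  count (fun k => f k == i) (iota 0 m).
Definition sfibelt (f : nat -> nat) (m i l : nat) : nat :=
  nth 0 [seq k <- iota 0 m | f k == i] l.
Definition sfibidx (f : nat -> nat) (m k : nat) : nat :=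
  index k [seq k' <- iota 0 m | f k' == f k].

(* Data of an operadic category, presented essentially-algebraically:       *)
(* a type of objects, a type of morphisms with odom/ocod, identities and      *)
(* composition (ocomp g f = g o f), the cardinality functor |.| (ocard on     *)
(* objects, ocardm on morphisms), and the fibre functors R_c:                *)
(*   ofib psi i      = psi^{-1} i          (i < |ocod psi|)                  *)
(*   ofibm phi psi j = phi^psi_j : (psi phi)^{-1} j -> psi^{-1} j            *)
(*                    i.e. the j-th component of R_d(phi : psi phi -> psi). *)
Record OpCatData := OpCatD {
  Ob : Type;
  Mor : Type;
  odom : Mor -> Ob;
  ocod : Mor -> Ob;
  oid : Ob -> Mor;
  ocomp : Mor -> Mor -> Mor;
  ocard : Ob -> nat;
  ocardm : Mor -> nat -> nat;
  ofib : Mor -> nat -> Ob;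
  ofibm : Mor -> Mor -> nat -> Mor
}.

Section OpCat.
Variable C : OpCatData.
Local Notation Ob := (Ob C).
Local Notation Mor := (Mor C).
Local Notation odom := (@odom C).
Local Notation ocod := (@ocod C).
Local Notation oid := (@oid C).
Local Notation ocomp := (@ocomp C).
Local Notation ocard := (@ocard C).
Local Notation ocardm := (@ocardm C).
Local Notation ofib := (@ofib C).
Local Notation ofibm := (@ofibm C).

Definition trivial (u : Ob) : Prop :=
  [/\ ocard u = 1,
      (forall psi, ocod psi = u -> ofib psi 0 = odom psi) &
      (forall phi psi, ocod psi = u -> ocod phi = odom psi -> ofibm phi psi 0 = phi)].

(* fibrewise trivial morphisms: the morphisms of the wide subcategory \mathbb C *)
Definition inC (pi : Mor) : Prop :=
  forall i, i < ocard (ocod pi) -> trivial (ofib pi i).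

Definition is_opcat : Prop :=
  (forall c, odom (oid c) = c /\ ocod (oid c) = c) /\
  (forall f g, ocod f = odom g -> odom (ocomp g f) = odom f /\ ocod (ocomp g f) = ocod g) /\
  (forall f, ocomp f (oid (odom f)) = f /\ ocomp (oid (ocod f)) f = f) /\
  (forall f g h, ocod f = odom g -> ocod g = odom h ->
     ocomp h (ocomp g f) = ocomp (ocomp h g) f) /\
  (forall f i, i < ocard (odom f) -> ocardm f i < ocard (ocod f)) /\
  (forall c i, i < ocard c -> ocardm (oid c) i = i) /\
  (forall f g i, ocod f = odom g -> i < ocard (odom f) ->
     ocardm (ocomp g f) i = ocardm g (ocardm f i)) /\
  (forall phi psi j, ocod phi = odom psi -> j < ocard (ocod psi) ->
     odom (ofibm phi psi j) = ofib (ocomp psi phi) j /\ ocod (ofibm phi psi j) = ofib psi j) /\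
  (forall psi j, j < ocard (ocod psi) -> ofibm (oid (odom psi)) psi j = oid (ofib psi j)) /\
  (forall phi' phi psi j, ocod phi' = odom phi -> ocod phi = odom psi ->
     j < ocard (ocod psi) ->
     ofibm (ocomp phi phi') psi j = ocomp (ofibm phi psi j) (ofibm phi' (ocomp psi phi) j)) /\
  (* |.|^{|c|} o R_c = R_{|c|} o (|.|/c) *)
  (forall psi j, j < ocard (ocod psi) ->
     ocard (ofib psi j) = sfibcard (ocardm psi) (ocard (odom psi)) j) /\
  (forall phi psi j k, ocod phi = odom psi -> j < ocard (ocod psi) ->
     k < ocard (ofib (ocomp psi phi) j) ->
     ocardm (ofibm phi psi j) k =
     sfibidx (ocardm psi) (ocard (odom psi))
       (ocardm phi (sfibelt (ocardm (ocomp psi phi)) (ocard (odom phi)) j k))) /\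
  (forall c i, i < ocard c -> trivial (ofib (oid c) i)) /\
  (* double slice condition, on objects and on morphisms of (C/d)/psi, with
     the identification |c| = sum_j |psi|^{-1} j, k |-> (|psi| k, sfibidx k) *)
  (forall phi psi k, ocod phi = odom psi -> k < ocard (odom psi) ->
     ofib phi k =
     ofib (ofibm phi psi (ocardm psi k)) (sfibidx (ocardm psi) (ocard (odom psi)) k)) /\
  (forall chi phi psi k, ocod chi = odom phi -> ocod phi = odom psi ->
     k < ocard (odom psi) ->
     ofibm chi phi k =
     ofibm (ofibm chi (ocomp psi phi) (ocardm psi k)) (ofibm phi psi (ocardm psi k))
          (sfibidx (ocardm psi) (ocard (odom psi)) k)).

(* Collections: objects of Set/C.  A collection is a carrier type with a    *)
(* map bd (= \partial) to objects, restricted to the elements satisfying    *)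
(* okc; X_c = { x | okc x /\ bd x = c }.                                    *)
Record coll := Coll { car : Type; bd : car -> Ob; okc : car -> Prop }.

Definition is_map (X Y : coll) (f : car X -> car Y) : Prop :=
  forall t, okc t -> okc (f t) /\ bd (f t) = bd t.

(* X * Y : elements (x, phi, y) with phi : c -> d, x in X_d,
   y = (y_i)_{i < |d|}, y_i in Y_{phi^{-1} i} *)
Definition tens (X Y : coll) : coll :=
  @Coll (car X * Mor * seq (car Y))%type
    (fun t => odom t.1.2)
    (fun t => let: (x, phi, ys) := t in
       [/\ okc x, bd x = ocod phi,
           map (@bd Y) ys = mkseq (ofib phi) (ocard (ocod phi)) &
           List.Forall (@okc Y) ys]).

Definition Ucoll : coll := @Coll Ob id trivial.

Definition tmap (X X' Y Y' : coll) (f : car X -> car X') (g : car Y -> car Y')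
  (t : car (tens X Y)) : car (tens X' Y') :=
  let: (x, phi, ys) := t in (f x, phi, map g ys).

(* alpha (x, psi, y, phi, z) = (x, psi phi, y, phi^psi, z);
   the z-family is split along |d| = sum_j |psi|^{-1} j *)
Definition alpha (X Y Z : coll) (t : car (tens (tens X Y) Z)) :
  car (tens X (tens Y Z)) :=
  let: ((x, psi, ys), phi, zs) := t in
  (x, ocomp psi phi,
   [seq (p.2, ofibm phi psi p.1,
         mask [seq ocardm psi k == p.1 | k <- iota 0 (size zs)] zs)
   | p <- zip (iota 0 (size ys)) ys]).

(* lambda_U : U * U -> U,  lambda(u, phi, x) = x *)
Definition lamU (t : car (tens Ucoll Ucoll)) : car Ucoll :=
  let: (u, phi, us) := t in head (odom phi) us.

(* 1 * lambda : X * (U * Y) -> X * Y  (on valid elements each inner family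
   has exactly one member, lambda(u,phi,(y)) = y) *)
Definition one_lam (X Y : coll) (t : car (tens X (tens Ucoll Y))) :
  car (tens X Y) :=
  let: (x, phi, ts) := t in (x, phi, flatten [seq s.2 | s <- ts]).

Definition rho (X : coll) (x : car X) : car (tens X Ucoll) :=
  (x, oid (bd x), mkseq (ofib (oid (bd x))) (ocard (bd x))).

Definition is_module (X : coll) (r : car (tens X Ucoll) -> car X) : Prop :=
  [/\ is_map r,
      (forall w, @okc (tens (tens X Ucoll) Ucoll) w ->
         r (tmap r id w) = r (@one_lam X Ucoll (alpha w))) &
      (forall x, okc x -> r (rho x) = x)].

(* the pairs identified by the coequalizer of r_X * 1 and (1 * lambda) o alpha *)
Definition Rco (X Y : coll) (rX : car (tens X Ucoll) -> car X)
  (a b : car (tens X Y)) : Prop :=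
  exists w, @okc (tens (tens X Ucoll) Y) w /\
    a = tmap rX id w /\ b = one_lam (alpha w).

Definition Rsim (X Y : coll) (rX : car (tens X Ucoll) -> car X)
  (a b : car (tens X Y)) : Prop :=
  exists x phi pi (ys : seq (car Y)),
    [/\ @okc (tens X Y) a, a = (x, ocomp pi phi, ys),
        ocod phi = odom pi, inC pi &
        b = (rX (x, pi, mkseq (ofib pi) (ocard (ocod pi))), phi,
             pmap (fun i => onth ys (ocardm pi i)) (iota 0 (ocard (ocod phi))))].

Definition ysigma (Y : coll) (rY : car (tens Y Ucoll) -> car Y)
  (phi sigma : Mor) (ys : seq (car Y)) : seq (car Y) :=
  [seq rY (p.2, ofibm sigma phi p.1,
           mkseq (ofib (ofibm sigma phi p.1)) (ocard (ofib phi p.1)))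
  | p <- zip (iota 0 (size ys)) ys].

End OpCat.

Arguments Coll {C}.

(* Main.v *)
Require Import Defs.
From Stdlib Require Import Relations.Relation_Operators.
From Stdlib Require List.
From mathcomp Require Import all_boot zify.
Set Implicit Arguments. Unset Strict Implicit.

Lemma mask_map_filter (T : Type) (P : nat -> bool) (g : nat -> T) (s : seq nat) :
  mask (map P s) (map g s) = map g (filter P s).
Proof. by elim: s => //= a s IH; case: (P a) => /=; rewrite IH. Qed.

Lemma map_zip1 (A B D : Type) (G : A -> D) (a : seq A) (b : seq B) :
  size a <= size b -> map (fun p => G p.1) (zip a b) = map G a.
Proof. move=> H; by rewrite -{2}(unzip1_zip H) -map_comp. Qed.

Lemma zip_iota_nth (T : Type) (s : seq T) (y0 : T) :
  zip (iota 0 (size s)) s = [seq (j, nth y0 s j) | j <- iota 0 (size s)].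
Proof.
apply: (@eq_from_nth _ (0, y0)); first by rewrite size_zip size_map size_iota minnn.
move=> i; rewrite size_zip size_iota minnn => Hi.
by rewrite nth_zip ?size_iota // (nth_map 0) ?size_iota // nth_iota.
Qed.

Lemma Forall_nth (T : Type) (P : T -> Prop) s y0 :
  List.Forall P s -> forall i, i < size s -> P (nth y0 s i).
Proof.
elim=> //= a l Pa _ IH [|i] //= Hi; exact: IH.
Qed.

Lemma nth_Forall (T : Type) (P : T -> Prop) s :
  (forall y0 i, i < size s -> P (nth y0 s i)) -> List.Forall P s.
Proof.
elim: s => [|a s IH] H; first by constructor.
constructor; first exact: (H a 0).
by apply: IH => y0 i Hi; apply: (H y0 i.+1).
Qed.

Lemma map_index_uniq (s : seq nat) : uniq s -> map (index^~ s) s = iota 0 (size s).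
Proof.
move=> U; apply: (@eq_from_nth _ 0); first by rewrite size_map size_iota.
move=> i; rewrite size_map => Hi.
by rewrite (nth_map 0) // nth_iota // index_uniq.
Qed.

Definition finv (f : nat -> nat) (M j : nat) := nth 0 [seq k <- iota 0 M | f k == j] 0.

Lemma bij_filter f M N : (forall j, j < N -> count (fun k => f k == j) (iota 0 M) = 1) ->
  forall j, j < N -> [seq k <- iota 0 M | f k == j] = [:: finv f M j].
Proof.
move=> Hc j Hj; rewrite /finv; have := Hc j Hj; rewrite -size_filter.
by case: [seq k <- iota 0 M | f k == j] => [|a [|b t]].
Qed.

Lemma bij_finv f M N : (forall j, j < N -> count (fun k => f k == j) (iota 0 M) = 1) ->
  forall j, j < N -> finv f M j < M /\ f (finv f M j) = j.
Proof.
move=> Hc j Hj.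
have : finv f M j \in [seq k <- iota 0 M | f k == j] by rewrite (bij_filter Hc Hj) mem_seq1.
by rewrite mem_filter mem_iota add0n => /andP [/eqP -> /andP [_ ->]].
Qed.

Lemma bij_finvK f M N : (forall k, k < M -> f k < N) ->
  (forall j, j < N -> count (fun k => f k == j) (iota 0 M) = 1) ->
  forall k, k < M -> finv f M (f k) = k.
Proof.
move=> Hl Hc k Hk.
have : k \in [seq k' <- iota 0 M | f k' == f k].
  by rewrite mem_filter eqxx mem_iota add0n Hk.
by rewrite (bij_filter Hc (Hl k Hk)) mem_seq1 => /eqP H; rewrite -H.
Qed.


Lemma zip_iota_Forall (T : Type) (P : nat * T -> Prop) (ys : seq T) m :
  (forall j y, m <= j < m + size ys -> y = nth y ys (j - m) -> P (j, y)) ->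
  List.Forall P (zip (iota m (size ys)) ys).
Proof.
elim: ys m => [|y0 ys IH] m H /=; first by constructor.
constructor; first by apply: H; [simpl; lia | rewrite subnn].
apply: IH => j y Hj Ey; apply: H; first by simpl; lia.
have -> : j - m = (j - m.+1).+1 by lia.
exact: Ey.
Qed.

Lemma Forall_map_eq (A B : Type) (F G : A -> B) (l : seq A) :
  List.Forall (fun a => F a = G a) l -> map F l = map G l.
Proof. by elim=> //= a l' -> _ ->. Qed.

Lemma nth_of_map_mkseq (A B : Type) (bd : A -> B) (g : nat -> B) (ys : seq A) n :
  map bd ys = mkseq g n -> size ys = n /\ forall y j, j < n -> bd (nth y ys j) = g j.
Proof.
move=> E; have Hs : size ys = n by rewrite -(size_map bd) E size_mkseq.
split=> // y j Hj.
by rewrite -(nth_map y (bd y)) ?Hs // E nth_mkseq.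
Qed.

Lemma onth_lt (T : Type) (s : seq T) y0 n : n < size s -> onth s n = Some (nth y0 s n).
Proof. by elim: s n => [|a s IH] [|n] //= H; apply: IH. Qed.

Lemma pmap_onth (T : Type) (ys : seq T) y0 (g : nat -> nat) (s : seq nat) :
  (forall i, i \in s -> g i < size ys) ->
  pmap (fun i => onth ys (g i)) s = map (fun i => nth y0 ys (g i)) s.
Proof.
elim: s => //= a s IH H.
rewrite (onth_lt y0) ?H ?mem_head //= IH // => i Hi; apply: H.
by rewrite in_cons Hi orbT.
Qed.

Lemma flatten_map1 (A T : Type) (h : A -> T) (s : seq A) :
  flatten [seq [:: h j] | j <- s] = map h s.
Proof. by elim: s => //= a s ->. Qed.

Lemma Forall_iota (P : nat -> Prop) a n :
  (forall i, a <= i < a + n -> P i) -> List.Forall P (iota a n).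
Proof.
elim: n a => [|n IH] a H /=; constructor; first by apply: H; lia.
by apply: IH => i Hi; apply: H; lia.
Qed.

Lemma bij_L2 (T : Type) f M N (ys : seq T) y0 :
  (forall k, k < M -> f k < N) ->
  (forall j, j < N -> count (fun k => f k == j) (iota 0 M) = 1) ->
  size ys = N ->
  pmap (fun i => onth ys (f i)) (iota 0 M) = map (fun i => nth y0 ys (f i)) (iota 0 M) /\
  flatten [seq mask [seq f k == j | k <- iota 0 (size (pmap (fun i => onth ys (f i)) (iota 0 M)))]
                    (pmap (fun i => onth ys (f i)) (iota 0 M)) | j <- iota 0 N] = ys.
Proof.
move=> Hl Hc Hs.
have E : pmap (fun i => onth ys (f i)) (iota 0 M) = map (fun i => nth y0 ys (f i)) (iota 0 M).
  by apply: pmap_onth => i; rewrite mem_iota Hs => /andP [_ Hi]; apply: Hl.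
split => //; rewrite E size_map size_iota.
rewrite -[RHS](mkseq_nth y0 ys) /mkseq Hs -(flatten_map1 (nth y0 ys)).
congr flatten; apply/eq_in_map => j; rewrite mem_iota => /andP [_ Hj].
have [_ Hf] := bij_finv Hc Hj.
by rewrite mask_map_filter (bij_filter Hc Hj) /= Hf.
Qed.

Lemma bij_L1 (T : Type) f M N (ys : seq T) y0 :
  (forall k, k < M -> f k < N) ->
  (forall j, j < N -> count (fun k => f k == j) (iota 0 M) = 1) ->
  size ys = M ->
  flatten [seq mask [seq f k == j | k <- iota 0 M] ys | j <- iota 0 N] =
    map (fun j => nth y0 ys (finv f M j)) (iota 0 N) /\
  pmap (fun i => onth (flatten [seq mask [seq f k == j | k <- iota 0 M] ys | j <- iota 0 N]) (f i)) (iota 0 M) = ys.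
Proof.
move=> Hl Hc Hs.
have E : flatten [seq mask [seq f k == j | k <- iota 0 M] ys | j <- iota 0 N] =
    map (fun j => nth y0 ys (finv f M j)) (iota 0 N).
  rewrite -(flatten_map1 (fun j => nth y0 ys (finv f M j))).
  congr flatten; apply/eq_in_map => j; rewrite mem_iota => /andP [_ Hj].
  rewrite -[in LHS](mkseq_nth y0 ys) /mkseq Hs mask_map_filter.
  by rewrite (bij_filter Hc Hj).
split => //; rewrite E (pmap_onth y0).
  rewrite -[RHS](mkseq_nth y0 ys) /mkseq Hs; apply/eq_in_map => i; rewrite mem_iota => /andP [_ Hi].
  have Hfi := Hl i Hi.
  by rewrite (nth_map 0) ?size_iota // nth_iota // (bij_finvK Hl Hc Hi).
by move=> i; rewrite mem_iota size_map size_iota => /andP [_ Hi]; apply: Hl.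
Qed.

Lemma triv_us (C : OpCatData) (u : Ob C) phi us :
  trivial u -> u = ocod phi -> map id us = mkseq (ofib phi) (ocard (ocod phi)) ->
  us = [:: odom phi].
Proof.
move=> [H1 H2 _] Eu; rewrite map_id -Eu H1 /= => ->.
rewrite /mkseq /=; by rewrite H2.
Qed.

Lemma part1 (C : OpCatData) (HC : is_opcat C) :
  (is_module (@lamU C) /\
   forall r, is_module r ->
     forall t, @okc C (tens (Ucoll C) (Ucoll C)) t -> r t = lamU t).
Proof.
have [Hid [Hcomp [Hunit [Hassoc [Hcardlt [Hcardid [Hcardcomp [Hfdc [Hfid [Hfcomp [Hfcard [Hfmcard [Hidtriv [Hds1 Hds2]]]]]]]]]]]]]] := HC.
split.
  split.
  - move=> [[u phi] us] /= [Tu Eu Eus Fus].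
    rewrite (triv_us Tu Eu Eus) /=; split => //.
    move: Fus; rewrite (triv_us Tu Eu Eus); exact: List.Forall_inv.
  - move=> [[[[x psi] ys] phi] zs] /= [[Tx Ex Eys Fys] Ephi Ezs Fzs].
    rewrite (triv_us Tx Ex Eys) /=.
    have Tp : trivial (odom psi).
      move: Fys; rewrite (triv_us Tx Ex Eys); exact: List.Forall_inv.
    rewrite Ephi in Tp.
    have Ez := triv_us Tp erefl Ezs.
    rewrite map_id Ez /=.
    have Hx1 : ocard x = 1 by case: Tx.
    have Hp1 : ocard (odom psi) = 1 by rewrite Ephi; case: Tp.
    have : ocardm psi 0 < ocard (ocod psi) by apply: Hcardlt; rewrite Hp1.
    by rewrite -Ex Hx1 ltnS leqn0 => /eqP ->.
  - move=> x Tx /=.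
    have [H1 H2 _] := Tx.
    rewrite H1 /= H2; by case: (Hid x).
move=> r [Hr _ _] [[u phi] us] Hok.
have [_ /= ->] := Hr _ Hok.
move: Hok => /= [Tu Eu Eus _].
by rewrite (triv_us Tu Eu Eus).
Qed.

Lemma mask_fib (C : OpCatData) (HC : is_opcat C) (phi sigma : Mor C) j :
  ocod sigma = odom phi -> j < ocard (ocod phi) ->
  mask [seq ocardm phi k == j | k <- iota 0 (size (mkseq (ofib sigma) (ocard (ocod sigma))))]
       (mkseq (ofib sigma) (ocard (ocod sigma)))
  = mkseq (ofib (ofibm sigma phi j)) (ocard (ofib phi j)).
Proof.
have [Hid [Hcomp [Hunit [Hassoc [Hcardlt [Hcardid [Hcardcomp [Hfdc [Hfid [Hfcomp [Hfcard [Hfmcard [Hidtriv [Hds1 Hds2]]]]]]]]]]]]]] := HC.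
move=> Es Hj.
rewrite size_mkseq /mkseq mask_map_filter Es.
set s := [seq k <- iota 0 _ | _].
have Hs : size s = ocard (ofib phi j) by rewrite size_filter Hfcard.
transitivity [seq ofib (ofibm sigma phi j) (index k s) | k <- s].
  apply/eq_in_map => k; rewrite mem_filter mem_iota => /andP [/eqP Ek /andP [_ Hk]].
  rewrite (Hds1 sigma phi k Es Hk) Ek /sfibidx Ek //.
by rewrite -Hs (map_comp (ofib (ofibm sigma phi j)) (index^~ s)) map_index_uniq // filter_uniq // iota_uniq.
Qed.

Lemma fib_elt (C : OpCatData) (HC : is_opcat C) (phi sigma : Mor C) j l :
  ocod sigma = odom phi -> j < ocard (ocod phi) -> l < ocard (ofib phi j) ->
  exists k, k < ocard (odom phi) /\ ofib (ofibm sigma phi j) l = ofib sigma k.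
Proof.
have [Hid [Hcomp [Hunit [Hassoc [Hcardlt [Hcardid [Hcardcomp [Hfdc [Hfid [Hfcomp [Hfcard [Hfmcard [Hidtriv [Hds1 Hds2]]]]]]]]]]]]]] := HC.
move=> Es Hj Hl.
set s := [seq k <- iota 0 (ocard (odom phi)) | ocardm phi k == j].
have Hs : size s = ocard (ofib phi j) by rewrite size_filter Hfcard.
have Hin : nth 0 s l \in s by rewrite mem_nth // Hs.
move: (Hin); rewrite mem_filter mem_iota => /andP [/eqP Ek /andP [_ Hk]].
exists (nth 0 s l); split => //.
have Hu : uniq s by rewrite filter_uniq // iota_uniq.
have Hls : l < size s by rewrite Hs.
by rewrite (Hds1 sigma phi _ Es Hk) Ek /sfibidx Ek -/s (index_uniq 0 Hls Hu).
Qed.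

Lemma part3 (C : OpCatData) (HC : is_opcat C) :
  (forall (X Y : coll C) rX rY, is_module rX -> @is_module C Y rY ->
     forall x phi ys sigma,
       @okc C (tens X Y) (x, phi, ys) -> ocod sigma = odom phi -> inC sigma ->
       @okc C (tens X Y) (x, ocomp phi sigma, ysigma rY phi sigma ys) /\
       clos_refl_sym_trans _ (@Rco C X Y rX)
         (tmap id rY (@alpha C X Y (Ucoll C) ((x, phi, ys), sigma,
                             mkseq (ofib sigma) (ocard (ocod sigma)))))
         (x, ocomp phi sigma, ysigma rY phi sigma ys)).
Proof.
have [Hid [Hcomp [Hunit [Hassoc [Hcardlt [Hcardid [Hcardcomp [Hfdc [Hfid [Hfcomp [Hfcard [Hfmcard [Hidtriv [Hds1 Hds2]]]]]]]]]]]]]] := HC.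
move=> X Y rX rY _ [HrY _ _] x phi ys sigma [okx Ex Eys Fys] Es Hsig.
have [Hsz Hbd] := nth_of_map_mkseq Eys.
have [Hcd1 Hcd2] := Hcomp sigma phi Es.
have Hel : forall j y, 0 <= j < 0 + size ys -> y = nth y ys (j - 0) ->
   @okc C (tens Y (Ucoll C)) (y, ofibm sigma phi j,
        mkseq (ofib (ofibm sigma phi j)) (ocard (ofib phi j))).
  move=> j y /andP [_ Hj] Ey; rewrite subn0 in Ey; rewrite Hsz in Hj.
  have [Hd Hc] := Hfdc sigma phi j Es Hj.
  split.
  - by rewrite Ey; apply: Forall_nth => //; rewrite Hsz.
  - by rewrite Ey Hbd // Hc.
  - by rewrite map_id Hc.
  - apply: nth_Forall => u0 l; rewrite size_mkseq => Hl; rewrite nth_mkseq //.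
    have [k [Hk ->]] := fib_elt HC Es Hj Hl.
    by apply: Hsig; rewrite Es.
split.
  split => //; first by rewrite Hcd2.
  - rewrite /ysigma -map_comp.
    rewrite (@Forall_map_eq _ _ _ (fun p => ofib (ocomp phi sigma) p.1)).
      by rewrite map_zip1 ?size_iota // Hsz Hcd2.
    apply: zip_iota_Forall => j y Hj Ey /=.
    rewrite (HrY _ (Hel j y Hj Ey)).2 /=.
    move: Hj => /andP [_ Hj]; rewrite Hsz in Hj.
    by have [-> _] := Hfdc sigma phi j Es Hj.
  - rewrite /ysigma; apply/List.Forall_map.
    apply: zip_iota_Forall => j y Hj Ey /=.
    exact: (HrY _ (Hel j y Hj Ey)).1.
rewrite /= /ysigma -map_comp.
have -> : [seq (rY \o (fun p => (p.2, ofibm sigma phi p.1,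
              mask [seq ocardm phi k == p.1 | k <- iota 0 (size (mkseq (ofib sigma) (ocard (ocod sigma))))]
                (mkseq (ofib sigma) (ocard (ocod sigma)))))) x0
          | x0 <- zip (iota 0 (size ys)) ys] = ysigma rY phi sigma ys.
  apply: Forall_map_eq; apply: zip_iota_Forall => j y /andP [_ Hj] _ /=.
  rewrite add0n Hsz in Hj.
  by rewrite mask_fib.
exact: rst_refl.
Qed.

Lemma inC_bij (C : OpCatData) (HC : is_opcat C) (pi : Mor C) : inC pi ->
  (forall k, k < ocard (odom pi) -> ocardm pi k < ocard (ocod pi)) /\
  (forall j, j < ocard (ocod pi) ->
     count (fun k => ocardm pi k == j) (iota 0 (ocard (odom pi))) = 1).
Proof.
have [Hid [Hcomp [Hunit [Hassoc [Hcardlt [Hcardid [Hcardcomp [Hfdc [Hfid [Hfcomp [Hfcard [Hfmcard [Hidtriv [Hds1 Hds2]]]]]]]]]]]]]] := HC.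
move=> Hpi; split; first by move=> k; apply: Hcardlt.
move=> j Hj; have := Hfcard pi j Hj; rewrite /sfibcard => <-.
by case: (Hpi j Hj).
Qed.

Lemma fib_comp_inC (C : OpCatData) (HC : is_opcat C) (pi phi : Mor C) k :
  inC pi -> ocod phi = odom pi -> k < ocard (odom pi) ->
  ofib phi k = ofib (ocomp pi phi) (ocardm pi k).
Proof.
have [Hid [Hcomp [Hunit [Hassoc [Hcardlt [Hcardid [Hcardcomp [Hfdc [Hfid [Hfcomp [Hfcard [Hfmcard [Hidtriv [Hds1 Hds2]]]]]]]]]]]]]] := HC.
move=> Hpi Eph Hk.
have [Hl Hc] := inC_bij HC Hpi.
rewrite (Hds1 phi pi k Eph Hk) /sfibidx (bij_filter Hc (Hl k Hk)) (bij_finvK Hl Hc Hk) /= eqxx.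
have [Hd Hcd] := Hfdc phi pi _ Eph (Hl k Hk).
have [_ H2 _] := Hpi _ (Hl k Hk).
by rewrite H2.
Qed.

Lemma with_default (T : Type) (ys : seq T) (P : Prop) :
  (forall y0 : T, P) -> (ys = [::] -> P) -> P.
Proof. by case: ys => [|y ys] H1 H2; [apply: H2 | apply: H1 y]. Qed.

Lemma RsimRco (C : OpCatData) (HC : is_opcat C) (X Y : coll C) rX
  (a b : car (tens X Y)) : Rsim rX a b -> Rco rX b a.
Proof.
have [Hid [Hcomp [Hunit [Hassoc [Hcardlt [Hcardid [Hcardcomp [Hfdc [Hfid [Hfcomp [Hfcard [Hfmcard [Hidtriv [Hds1 Hds2]]]]]]]]]]]]]] := HC.
move=> [x [phi [pi [ys [okA Ea Eph Hpi ->]]]]].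
subst a; move: okA => [okx Ex Eys Fys].
have [Hcd1 Hcd2] := Hcomp phi pi Eph.
have [Hl Hc] := inC_bij HC Hpi.
have [Hsz Hbd] := nth_of_map_mkseq Eys.
rewrite Hcd2 in Hsz Hbd.
rewrite Eph.
set M := ocard (odom pi) in Hl Hc *.
set N := ocard (ocod pi) in Hl Hc Hsz Hbd *.
rewrite /Rco.
have HM0 : N = 0 -> M = 0.
  move=> HN; apply/eqP; rewrite -leqn0 leqNgt; apply/negP => HM; have := Hl 0 HM; by rewrite HN.
have okU : List.Forall (@trivial C) (mkseq (ofib pi) N).
  apply/List.Forall_map/Forall_iota => i Hi; apply: Hpi; lia.
have [[y0 _]|Ey0] : (exists y0 : car Y, True) \/ ys = [::].
  by case: (ys) => [|y ?]; [right | left; exists y].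
  have [E1 E2] := bij_L2 y0 Hl Hc Hsz.
  exists (((x, pi, mkseq (ofib pi) N), phi, pmap (fun i => onth ys (ocardm pi i)) (iota 0 M)) : car (tens (tens X (Ucoll C)) Y)).
  split; [split | split].
  - split => //; try by rewrite Ex Hcd2.
    exact: map_id.
  - by rewrite Eph.
  - rewrite /= E1 -map_comp Eph /mkseq; apply/eq_in_map => i; rewrite mem_iota => /andP [_ Hi].
    by rewrite /= Hbd ?Hl // -fib_comp_inC.
  - rewrite E1; apply/List.Forall_map/Forall_iota => i Hi.
    apply: Forall_nth => //; rewrite Hsz; apply: Hl; lia.
  - by rewrite /= map_id.
  - rewrite /= -map_comp size_mkseq.
    rewrite -{1}E2; congr (_, _, flatten _); symmetry.
    apply: (@map_zip1 _ _ _ (fun j => mask [seq ocardm pi k == j | k <- iota 0 (size (pmap (fun i => onth ys (ocardm pi i)) (iota 0 M)))] (pmap (fun i => onth ys (ocardm pi i)) (iota 0 M)))).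
    by rewrite size_iota size_mkseq.
have HN : N = 0 by rewrite -Hsz Ey0.
have HM := HM0 HN.
rewrite HM Ey0.
exists (((x, pi, mkseq (ofib pi) N), phi, [::]) : car (tens (tens X (Ucoll C)) Y)).
split; [split | split].
- split => //; try by rewrite Ex Hcd2.
  exact: map_id.
- by rewrite Eph.
- by rewrite Eph -/M HM.
- by constructor.
- by [].
- by rewrite /= HN.
Qed.

Lemma RcoRsim (C : OpCatData) (HC : is_opcat C) (X Y : coll C) rX
  (a b : car (tens X Y)) : Rco rX a b -> Rsim rX b a.
Proof.
have [Hid [Hcomp [Hunit [Hassoc [Hcardlt [Hcardid [Hcardcomp [Hfdc [Hfid [Hfcomp [Hfcard [Hfmcard [Hidtriv [Hds1 Hds2]]]]]]]]]]]]]] := HC.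
move=> [[[[[x pi] us] phi] ys] [[[okx Ex Eus Fus] Eph Eys Fys] [Ea Eb]]].
subst a b.
rewrite map_id in Eus.
have Hpi : inC pi.
  move=> i Hi; have := Forall_nth (ofib pi i) Fus (i := i).
  by rewrite Eus size_mkseq nth_mkseq //; apply.
have Eph' : ocod phi = odom pi by [].
have [Hcd1 Hcd2] := Hcomp phi pi Eph'.
have [Hl Hc] := inC_bij HC Hpi.
have [Hsz Hbd] := nth_of_map_mkseq Eys.
rewrite Eph' in Hsz Hbd.
set M := ocard (odom pi) in Hl Hc Hsz Hbd *.
set N := ocard (ocod pi) in Hl Hc Eus *.
rewrite Eus.
set YS := flatten [seq mask [seq ocardm pi k == j | k <- iota 0 M] ys | j <- iota 0 N].
have Eb : @one_lam C X Y (alpha ((x, pi, mkseq (ofib pi) N, phi, ys) : car (tens (tens X (Ucoll C)) Y))) = (x, ocomp pi phi, YS).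
  rewrite /= -map_comp size_mkseq Hsz /YS; congr (_, _, flatten _).
  apply: (@map_zip1 _ _ _ (fun j => mask [seq ocardm pi k == j | k <- iota 0 M] ys)).
  by rewrite size_iota size_mkseq.
rewrite Eb.
have HN0 : M = 0 -> N = 0.
  move=> HM; apply/eqP; rewrite -leqn0 leqNgt; apply/negP => HN.
  by have := Hc 0 HN; rewrite HM.
exists x, phi, pi, YS; split => //.
  have [[y0 _]|Ey0] : (exists y0 : car Y, True) \/ ys = [::].
    by case: (ys) => [|y ?]; [right | left; exists y].
    have [E1 E2] := bij_L1 y0 Hl Hc Hsz.
    split => //; first by rewrite Hcd2.
    - rewrite /YS E1 Hcd2 -map_comp /mkseq; apply/eq_in_map => j; rewrite mem_iota => /andP [_ Hj].
      have [Hf1 Hf2] := bij_finv Hc Hj.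
      by rewrite /= Hbd // (fib_comp_inC HC Hpi Eph' Hf1) Hf2.
    - rewrite /YS E1; apply/List.Forall_map/Forall_iota => j Hj.
      apply: Forall_nth => //; rewrite Hsz; apply: (proj1 (bij_finv Hc _)); lia.
  have HM : M = 0 by rewrite -Hsz Ey0.
  have HN := HN0 HM.
  have -> : YS = [::] by rewrite /YS HN.
  split => //; first by rewrite Hcd2.
  by rewrite Hcd2 /= -/N HN.
have [[y0 _]|Ey0] : (exists y0 : car Y, True) \/ ys = [::].
  by case: (ys) => [|y ?]; [right | left; exists y].
  have [E1 E2] := bij_L1 y0 Hl Hc Hsz.
  by rewrite /= map_id Eph' -/M -/YS E2.
have HM : M = 0 by rewrite -Hsz Ey0.
have HN := HN0 HM.
have -> : YS = [::] by rewrite /YS HN.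
by rewrite /= Eph' -/M HM Ey0.
Qed.

Lemma part2 (C : OpCatData) (HC : is_opcat C) :
  (forall (X Y : coll C) rX rY, is_module rX -> @is_module C Y rY ->
     forall a b, okc a -> okc b ->
       (clos_refl_sym_trans _ (@Rco C X Y rX) a b <->
        clos_refl_sym_trans _ (@Rsim C X Y rX) a b)).
Proof.
move=> X Y rX rY _ _ a b _ _; split.
- elim=> [u v H|u|u v _ IH|u v w _ IH1 _ IH2].
  + by apply: rst_sym; apply: rst_step; exact: (RcoRsim HC H).
  + exact: rst_refl.
  + exact: rst_sym.
  + exact: rst_trans IH1 IH2.
- elim=> [u v H|u|u v _ IH|u v w _ IH1 _ IH2].
  + by apply: rst_sym; apply: rst_step; exact: (RsimRco HC H).
  + exact: rst_refl.
  + exact: rst_sym.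
  + exact: rst_trans IH1 IH2.
Qed.

Theorem proposition9p2 (C : OpCatData) (HC : is_opcat C) :
  (is_module (@lamU C) /\
   forall r, is_module r ->
     forall t, @okc C (tens (Ucoll C) (Ucoll C)) t -> r t = lamU t) /\
  (forall (X Y : coll C) rX rY, is_module rX -> @is_module C Y rY ->
     forall a b, okc a -> okc b ->
       (clos_refl_sym_trans _ (@Rco C X Y rX) a b <->
        clos_refl_sym_trans _ (@Rsim C X Y rX) a b)) /\
  (forall (X Y : coll C) rX rY, is_module rX -> @is_module C Y rY ->
     forall x phi ys sigma,
       @okc C (tens X Y) (x, phi, ys) -> ocod sigma = odom phi -> inC sigma ->
       @okc C (tens X Y) (x, ocomp phi sigma, ysigma rY phi sigma ys) /\
       clos_refl_sym_trans _ (@Rco C X Y rX)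
         (tmap id rY (@alpha C X Y (Ucoll C) ((x, phi, ys), sigma,
                             mkseq (ofib sigma) (ocard (ocod sigma)))))
         (x, ocomp phi sigma, ysigma rY phi sigma ys)).
Proof.
split; first exact: part1 HC.
split; first exact: part2 HC.
exact: part3 HC.
Qed.
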